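(* For every integer $m\ge0$, the measure $\mathbb{P}^{(m)}_{\sigma}$ gives full measure to the set of paths $x=(x_p)_{p\in\mathcal P}\in\prod_{p\in\mathcal P}D(\mathbb{Q}_p)$ such that $x(t)\in\mathbb{A}_{\mathbb{Q}}$ for all $t\ge0$; that is, the adelic random walk $\mathbf S^{(m)}$ is almost surely $\mathbb{A}_{\mathbb{Q}}$-valued for all time.
   Context: Fix a real exponent $b>0$ and a sequence $\sigma=(\sigma_p)_{p\in\mathcal P}$ of nonnegative reals indexed by the set $\mathcal P$ of primes with $\sum_p\sigma_p<\infty$. For a prime $p$, $\mathbb{Q}_p$ denotes the $p$-adic numbers with absolute value $|\cdot|_p$ and $\mathbb{Z}_p$ its closed unit ball. Let $G_p\subset\mathbb{Q}_p$ be the set of $p$-adic numbers of the form $\sum_{k<0}a_kp^k$ with $a_k\in\{0,\dots,p-1\}$, only finitely many nonzero; $G_p$ is a set of representatives of $\mathbb{Q}_p/\mathbb{Z}_p$ and is given the group structure of $\mathbb{Q}_p/\mathbb{Z}_p$. Let $X^{(p)}$ be a $G_p$-valued random variable with $\Pr(|X^{(p)}|_p=p^k)=(p^b-1)p^{-kb}$ for every integer $k\ge1$, and, conditionally on $|X^{(p)}|_p=p^k$, uniformly distributed on the finite set $\{x\in G_p:|x|_p=p^k\}$. Let $X^{(p)}_1,X^{(p)}_2,\dots$ be i.i.d. copies of $X^{(p)}$ and $S^{(p)}_n=X^{(p)}_1+\dots+X^{(p)}_n$ (sum in the group $G_p$), $S^{(p)}_0=0$. Put $D_p=\frac{p^b(p-1)}{p^{b+1}-1}\sigma_p$.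 For an integer $m\ge0$, let $\mathbb{P}^{(m)}_p$ be the law on the Skorokhod space $D(\mathbb{Q}_p)$ of càdlàg paths $[0,\infty)\to\mathbb{Q}_p$ of the process $t\mapsto p^mS^{(p)}_{\lfloor D_pp^{mb}t\rfloor}$. Let $\mathbb{P}^{(m)}_\sigma=\prod_{p\in\mathcal P}\mathbb{P}^{(m)}_p$ be the product measure on $\prod_{p\in\mathcal P}D(\mathbb{Q}_p)$ (independent components, each random walk independent across primes), and call the coordinate process $\mathbf S^{(m)}(t)=(p^mS^{(p)}_{\lfloor D_pp^{mb}t\rfloor})_{p\in\mathcal P}$ the adelic random walk. The (finite rational) adeles are $\mathbb{A}_{\mathbb{Q}}=\{x=(x_p)\in\prod_p\mathbb{Q}_p: x_p\in\mathbb{Z}_p\text{ for all but finitely many }p\}$. *)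

(* Defs.v *)
From HB Require Import structures.
From mathcomp Require Import all_boot all_order all_algebra.
From mathcomp Require Import all_classical all_reals all_analysis.
Set Implicit Arguments. Unset Strict Implicit. Unset Printing Implicit Defensive.
Import Order.TTheory GRing.Theory Num.Theory.
Local Open Scope ring_scope.
Local Open Scope classical_set_scope.

(* p-adic absolute value |x|_p of a rational number x (Q is embedded in Q_p) *)
Definition padic_abs (p : nat) (x : rat) : rat :=
  if x == 0 then 0
  else (p%:Q ^+ logn p `|denq x|%N) / (p%:Q ^+ logn p `|numq x|%N).

Definition in_Zp (p : nat) (x : rat) : Prop := padic_abs p x <= 1.

(* G_p = { sum_{k<0} a_k p^k, a_k in {0..p-1}, finitely many nonzero }
       = rationals in [0,1) whose denominator is a power of p *)
Definition in_Gp (p : nat) (x : rat) : Prop :=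
  0 <= x /\ x < 1 /\ exists k : nat, denq x = (p ^ k)%:Z.

(* group law of G_p (that of Q_p/Z_p = Z[1/p]/Z): addition modulo 1 *)
Definition Gp_add (x y : rat) : rat := (x + y) - (Num.floor (x + y))%:~R.

(* partial sums S_n = X_0 + ... + X_{n-1} in G_p (X_0, X_1, ... play the
   role of X_1, X_2, ... in the paper) *)
Fixpoint Gp_walk {Omega : Type} (X : nat -> Omega -> rat) (n : nat) (w : Omega)
  : rat :=
  match n with
  | 0 => 0
  | n'.+1 => Gp_add (Gp_walk X n' w) (X n' w)
  end.

Definition Dp {R : realType} (b : R) (sigma : nat -> R) (p : nat) : R :=
  (p%:R `^ b * (p%:R - 1)) / (p%:R `^ (b + 1) - 1) * sigma p.

Definition mutually_independent {d : measure_display} {Omega : measurableType d}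
  {R : realType} {I : eqType} (P : probability Omega R) (X : I -> Omega -> rat)
  : Prop :=
  forall (s : seq I), uniq s -> forall A : I -> set rat,
    P (\bigcap_(i in [set` s]) (X i @^-1` A i)) =
    (\prod_(i <- s) P (X i @^-1` A i))%E.

(* Main.v *)
Require Import Defs.
From HB Require Import structures.
From mathcomp Require Import all_boot all_order all_algebra.
From mathcomp Require Import all_classical all_reals all_analysis.
From mathcomp Require Import ring lra.
Import Order.TTheory GRing.Theory Num.Theory.
Local Open Scope ring_scope. Local Open Scope classical_set_scope.

Definition goodq (m p : nat) (x : rat) := exists z : int, p%:Q ^+ m * x = z%:~R.

Lemma intr_natQ (n : nat) : (n%:Z)%:~R = n%:Q.
Proof. by []. Qed.

Lemma good0 m p : goodq m p 0.
Proof. by exists 0; rewrite mulr0. Qed.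

Lemma good_add m p x y : goodq m p x -> goodq m p y -> goodq m p (Gp_add x y).
Proof.
move=> [zx hx] [zy hy]; exists (zx + zy - (p%:Z ^+ m) * Num.floor (x + y)).
rewrite /Gp_add mulrBr mulrDr hx hy !rmorphB !rmorphD /= rmorphM /= rmorphXn /=.
by [].
Qed.

Lemma Zp_of_good m p x : prime p -> goodq m p x -> in_Zp p (p%:Q ^+ m * x).
Proof.
move=> pp [z ->]; rewrite /in_Zp /padic_abs; case: eqP => // _.
rewrite numq_int denq_int /= logn1 expr0 div1r invf_le1.
  by rewrite exprn_ege1 // ler1n prime_gt0.
by rewrite exprn_gt0 // ltr0n prime_gt0.
Qed.

Lemma good_of_abs m p x k : prime p -> in_Gp p x ->
  padic_abs p x = p%:Q ^+ k.+1 -> (k < m)%N -> goodq m p x.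
Proof.
move=> pp [x0 [x1 [j hj]]] hab km.
have p0 : (0 < p)%N by exact: prime_gt0.
suff jm : (j <= m)%N.
  exists (numq x * (p ^ (m - j))%:Z).
  have e : forall i, ((p ^ i)%N%:Z)%:~R = p%:Q ^+ i by move=> i; rewrite -natrX.
  rewrite -{1}(divq_num_den x) hj intrM !e -{1}(subnK jm) exprD.
  have : p%:Q ^+ j != 0 by rewrite expf_neq0 // pnatr_eq0 -lt0n.
  move=> h; field; exact h.
case: j hj => [|j] hj; first by [].
have xn0 : x != 0.
  apply/eqP => x00; move: hj; rewrite x00 /= => h.
  have h1 : (1 = p ^ j.+1)%N by move: h; rewrite (denq_int 0) => -[].
  have : (1 < p ^ j.+1)%N by rewrite -(expn0 p) ltn_exp2l ?prime_gt1.
  by rewrite -h1.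
move: hab; rewrite /padic_abs (negbTE xn0) hj /=.
rewrite pfactorK // logn_coprime; last first.
  have := coprime_num_den x; rewrite hj /= coprime_sym => c.
  by rewrite coprime_sym -(coprime_pexpr _ _ (ltn0Sn j)) coprime_sym.
rewrite expr0 divr1 -!natrX => /eqP; rewrite eqr_nat eqn_exp2l ?prime_gt1 //.
by move/eqP => ->.
Qed.

Lemma good_walk {O : Type} m p (X : nat -> O -> rat) N w :
  (forall n, (n < N)%N -> goodq m p (X n w)) ->
  goodq m p (Gp_walk X N w).
Proof.
elim: N => [|N IH] h /=; first exact: good0.
apply: good_add; last exact: h.
by apply: IH => n nN; apply: h; rewrite ltnS ltnW.
Qed.
Lemma telesc (R : realType) (q : R) : q != 0 -> forall m : nat,
  \sum_(k < m) (q - 1) * (q ^+ k.+1)^-1 = 1 - (q ^+ m)^-1.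
Proof.
move=> q0; elim=> [|m IH]; first by rewrite big_ord0 expr0 invr1 subrr.
rewrite big_ord_recr /= IH.
have h : q ^+ m != 0 by rewrite expf_neq0.
rewrite exprS; field; by rewrite h q0.
Qed.

Lemma meas_pre d (O : measurableType d) (f : O -> rat) :
  (forall v, measurable [set w | f w = v]) ->
  forall A : set rat, measurable (f @^-1` A).
Proof.
move=> hf A.
have -> : f @^-1` A = \bigcup_v ([set w | f w = v] `&` (fun _ => A v)).
  apply/seteqP; split => w /=.
    by move=> Aw; exists (f w).
  by move=> [v _ [/= fv Av]]; rewrite /preimage /= fv.
apply: bigcupT_measurable_rat => v; apply: measurableI => //.
have [Av|nAv] := pselect (A v).
  by have -> : (fun _ : O => A v) = setT by apply/funext => w; apply/propext.
by have -> : (fun _ : O => A v) = set0 by apply/funext => w; apply/propext.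
Qed.

Theorem theorem7 (R : realType) (b : R) (sigma : nat -> R)
  (d : measure_display) (Omega : measurableType d) (P : probability Omega R)
  (X : nat -> nat -> Omega -> rat) :
  0 < b ->
  (forall p, prime p -> 0 <= sigma p) ->
  (\esum_(p in [set p | prime p]) (sigma p)%:E < +oo)%E ->
  (* X p n is measurable, G_p-valued *)
  (forall p n v, prime p -> measurable [set w | X p n w = v]) ->
  (forall p n w, prime p -> in_Gp p (X p n w)) ->
  (* law of |X|_p *)
  (forall p n k, prime p -> (0 < k)%N ->
     P [set w | padic_abs p (X p n w) = (p%:Q ^+ k)] =
     ((p%:R `^ b - 1) * p%:R `^ (- (k%:R * b)))%:E) ->
  (* conditionally on |X|_p = p^k, uniform on {x in G_p : |x|_p = p^k} *)
  (forall p n x y, prime p -> in_Gp p x -> in_Gp p y ->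
     padic_abs p x = padic_abs p y ->
     P [set w | X p n w = x] = P [set w | X p n w = y]) ->
  (* all the X^{(p)}_n, over all primes p and all n, are independent *)
  mutually_independent P (fun pn : nat * nat => X pn.1 pn.2) ->
  forall m : nat,
  {ae P, forall w : Omega, forall t : R, 0 <= t ->
     finite_set [set p | prime p /\
       ~ in_Zp p (p%:Q ^+ m *
           Gp_walk (X p) (Num.truncn (Dp b sigma p * p%:R `^ (m%:R * b) * t)) w)]}.
Proof.
move=> hb hsig hsum hmeas hG hlaw _ _ m.
pose q p := (p%:R : R) `^ b.
have q1 : forall p, prime p -> 1 <= q p.
  move=> p pp; rewrite /q -{1}(powRr0 p%:R).
  have p1 : (1 : R) <= p%:R by rewrite ler1n prime_gt0.
  exact: (ler_powR p1 (ltW hb)).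
have q0 : forall p, prime p -> q p != 0.
  by move=> p pp; apply: lt0r_neq0; apply: lt_le_trans (q1 p pp).
have qk : forall p (k : nat), prime p -> p%:R `^ (k%:R * b) = q p ^+ k.
  by move=> p k pp; rewrite mulrC powRrM powR_mulrn // powR_ge0.
have p2 : forall p, prime p -> (2:R) <= p%:R.
  by move=> p pp; rewrite ler_nat prime_gt1.
have qb1 : forall p, prime p -> p%:R `^ (b + 1) = q p * p%:R.
  move=> p pp; rewrite powRD ?powRr1 ?ler0n //.
  by apply/implyP => _; rewrite pnatr_eq0 -lt0n prime_gt0.
have Dd : forall p, prime p -> 0 < q p * p%:R - 1.
  move=> p pp; have := q1 p pp; have := p2 p pp; nra.
have D0 : forall p, prime p -> 0 <= Dp b sigma p.
  move=> p pp; rewrite /Dp qb1 //; apply: mulr_ge0; last exact: hsig.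
  apply: divr_ge0; last exact: ltW (Dd p pp).
  have := q1 p pp; have := p2 p pp; rewrite /q; nra.
have Dle : forall p, prime p -> Dp b sigma p <= sigma p.
  move=> p pp; rewrite /Dp qb1 // -[leRHS]mul1r; apply: ler_wpM2r; first exact: hsig.
  rewrite ler_pdivrMr ?Dd // mul1r.
  have := q1 p pp; have := p2 p pp; rewrite /q; nra.
pose G p n (k : nat) := [set w | padic_abs p (X p n w) = p%:Q ^+ k.+1].
pose E p n := ~` \big[setU/set0]_(k < m) G p n k.
pose Np p (t : R) := Num.truncn (Dp b sigma p * p%:R `^ (m%:R * b) * t).
pose Bad p (T : nat) := \big[setU/set0]_(n < Np p T%:R) E p n.
pose F (T : nat) p := if prime p then Bad p T else set0.
have mG : forall p n k, prime p -> measurable (G p n k).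
  move=> p n k pp; have := @meas_pre _ _ (X p n) (fun v => hmeas p n v pp) [set v | padic_abs p v = p%:Q ^+ k.+1].
  by [].
have mE : forall p n, prime p -> measurable (E p n).
  by move=> p n pp; apply: measurableC; apply: bigsetU_measurable => k _; exact: mG.
have mF : forall T p, measurable (F T p).
  move=> T p; rewrite /F; case: ifP => pp //.
  by apply: bigsetU_measurable => n _; exact: mE.
have PE : forall p n, prime p -> P (E p n) = ((q p ^+ m)^-1)%:E.
  move=> p n pp; rewrite /E probability_setC; last first.
    by apply: bigsetU_measurable => k _; exact: mG.
  rewrite measure_semi_additive //; last first.
  - by apply: bigsetU_measurable => k _; exact: mG.
  - move=> i j _ _ [w [hi hj]]; rewrite /G /= in hi hj; move: hi; rewrite hj -!natrX => /eqP.
    by rewrite eqr_nat eqn_exp2l ?prime_gt1 // => /eqP [->].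
  - by move=> k; exact: mG.
  have -> : \sum_(i < m) P (G p n i) = (\sum_(i < m) ((q p - 1) * (q p ^+ i.+1)^-1))%:E.
    rewrite -sumEFin; apply: eq_bigr => k _; rewrite /G hlaw //.
    by rewrite powRN qk.
  rewrite telesc ?q0 // -EFinB; congr (_%:E); ring.
have PBad : forall p T, prime p -> (P (Bad p T) <= (T%:R * sigma p)%:E)%E.
  move=> p T pp; rewrite /Bad.
  apply: (@le_trans _ _ (\sum_(n < Np p T%:R) P (E p n))%E).
    by apply: le_mu_bigsetU => n _; exact: mE.
  under eq_bigr => n _ do rewrite PE //.
  rewrite sumEFin sumr_const card_ord lee_fin -(mulr_natl (q p ^- m)).
  have qm0 : 0 < q p ^+ m by rewrite exprn_gt0 // (lt_le_trans _ (q1 p pp)).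
  have hN : (Np p T%:R)%:R <= Dp b sigma p * q p ^+ m * T%:R.
    rewrite /Np qk // truncn_le; apply: mulr_ge0 => //; apply: mulr_ge0 => //.
      exact: D0.
    exact: ltW.
  apply: (le_trans (ler_wpM2r _ hN)); first by rewrite invr_ge0 ltW.
  have -> : Dp b sigma p * q p ^+ m * T%:R * (q p ^+ m)^-1 = Dp b sigma p * T%:R.
    by field; rewrite lt0r_neq0.
  rewrite mulrC; apply: ler_wpM2l => //; exact: Dle.
have hser : forall T, (\sum_(p <oo) P (F T p) < +oo)%E.
  move=> T.
  apply: (le_lt_trans (lee_nneseries (v := fun p => if prime p then (T%:R%:E * (sigma p)%:E)%E else 0%E) _ _)).
  - by move=> i _ _; exact: measure_ge0.
  - move=> p _; rewrite /F; case: ifP => pp; last by rewrite measure0.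
    by rewrite -EFinM; exact: PBad.
  rewrite -eseries_mkcond nneseriesZl; last by move=> i pi; rewrite lee_fin hsig.
  rewrite nneseries_esum; last by move=> i pi; rewrite lee_fin hsig.
  apply: lte_mul_pinfty => //; by rewrite lee_fin.
have nul : P.-negligible (\bigcup_T lim_sup_set (F T)).
  apply: negligible_bigcup => T; rewrite /negligible; exists (lim_sup_set (F T)); split.
  - rewrite /lim_sup_set; apply: bigcapT_measurable => n.
    by apply: bigcup_measurable => j _; exact: mF.
  - exact: (@lim_sup_set_cvg0 _ _ _ P (F T) (mF T) (hser T)).
  - by [].
apply: (negligibleS _ nul) => w /= Hw.
apply: contrapT => Hn; apply: Hw => t t0.
pose T := (Num.truncn t).+1.
have hT : t <= T%:R by apply/ltW/truncnS_gt.
have [K HK] : exists K, forall j, (K <= j)%N -> ~ F T j w.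
  apply: contrapT => hK; apply: Hn; exists T => //.
  move=> K _ /=.
  apply: contrapT => h; apply: hK; exists K => j Kj Fj; apply: h; by exists j.
apply: (sub_finite_set _ (finite_II K)) => p [pp hp] /=.
rewrite ltnNge; apply/negP => Kp.
apply: hp; apply: Zp_of_good => //; apply: good_walk => n hn.
have nB : ~ Bad p T w by have := HK p Kp; rewrite /F pp.
have hnE : ~ E p n w.
  move=> hE; apply: nB; rewrite /Bad -bigcup_mkord; exists n => //.
  apply: leq_trans hn _; apply: le_truncn; apply: ler_wpM2l => //.
  by apply: mulr_ge0; [exact: D0 | exact: powR_ge0].
move: hnE; rewrite /E /= -bigcup_mkord => /contrapT [k /= km hk].
exact: (@good_of_abs m p _ k pp (hG p n w pp) hk km).
Qed.
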